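(* Let $s$ be a stream over $\Sigma$ with hidden PFSA generator $G_s$, let $W$ be the zero model (flat white noise generator), and let $\epsilon>0$. With $\ell=\ln(1/\epsilon)/\ln|\Sigma|$, $$\lim_{|s|\to\infty}|\Theta(G_s,W)-\hat{\zeta}(s,\ell)|\le\epsilon.$$
   Context: $\Sigma=\{\sigma_1,\dots,\sigma_{|\Sigma|}\}$ is finite, $\Sigma^\star$ the finite strings, $|x|$ the length of $x$. For a string $s$, $\#^s(y)$ is the overlapping count of $y$ in $s$; symbolic derivative $\phi^s(x)|_i=\#^s(x\sigma_i)/\sum_j\#^s(x\sigma_j)$; $\mathcal{U}_\Sigma$ is the uniform distribution on $\Sigma$. $W$ is the single-state PFSA emitting each symbol i.i.d. with probability $1/|\Sigma|$. $\Theta(G_1,G_2)=\frac{|\Sigma|-1}{|\Sigma|}\lim_{|s_1|,|s_2|\to\infty}\sum_{x\in\Sigma^\star}\|\phi^{s_1}(x)-\phi^{s_2}(x)\|_\infty/|\Sigma|^{2|x|}$ for $s_i$ generated by $G_i$. The partial white noise deviation estimator is $\hat{\zeta}(s,\ell)=\frac{|\Sigma|-1}{|\Sigma|}\sum_{x\in\Sigma^\star,\,|x|\le\ell}\frac{1}{|\Sigma|^{2|x|}}\|\phi^s(x)-\mathcal{U}_\Sigma\|_\infty$, i.e. the sum restricted to strings of length at most $\ell$. *)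

(* Defs.v *)
From HB Require Import structures.
From mathcomp Require Import all_boot all_order all_algebra.
From mathcomp Require Import all_classical all_reals all_analysis.
Set Implicit Arguments. Unset Strict Implicit. Unset Printing Implicit Defensive.
Import Order.TTheory GRing.Theory Num.Theory.
Import numFieldNormedType.Exports.
Local Open Scope ring_scope.

Definition occ (T : eqType) (s y : seq T) : nat :=
  (\sum_(i < size s) (take (size y) (drop i s) == y))%N.

(* symbolic derivative phi^s(x), a function Sigma -> R;
   phi^s(x)|_a = #^s(x a) / sum_b #^s(x b)  (x/0 = 0 by MathComp convention) *)
Definition symder (R : realType) (T : finType) (s x : seq T) (a : T) : R :=
  (occ s (rcons x a))%:R / (\sum_(b : T) (occ s (rcons x b))%:R).

Definition supdist (R : realType) (T : finType) (f g : T -> R) : R :=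
  \big[Num.max/0]_(a : T) `|f a - g a|.

Definition unif (R : realType) (T : finType) : T -> R := fun _ => (#|T|%:R)^-1.

Definition level_term (R : realType) (T : finType) (F : seq T -> R) (k : nat) : R :=
  \sum_(x : k.-tuple T) F (tval x) / (#|T|%:R) ^+ (2 * k).

(* The (pre-limit) sum defining Theta, for two finite strings a b:
   (|S|-1)/|S| * sum_{x in S^*} ||phi^a(x) - phi^b(x)||_inf / |S|^(2|x|),
   the infinite sum over S^* taken as the limit of partial sums by length. *)
Definition Theta_sum (R : realType) (T : finType) (a b : seq T) : R :=
  ((#|T|%:R - 1) / #|T|%:R) *
  limn (fun n => \sum_(k < n)
          level_term (fun x => supdist (@symder R T a x) (@symder R T b x)) k).

Definition zeta_hat (R : realType) (T : finType) (s : seq T) (l : R) : R :=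
  ((#|T|%:R - 1) / #|T|%:R) *
  \sum_(k < (Num.truncn l).+1 | (k%:R <= l))
     level_term (fun x => supdist (@symder R T s x) (@unif R T)) k.

Definition stream_prefix (T : Type) (s : nat -> T) (n : nat) : seq T := mkseq s n.

(* Main.v *)
Require Import Defs.
From HB Require Import structures.
From mathcomp Require Import all_boot all_order all_algebra.
From mathcomp Require Import all_classical all_reals all_analysis.
From mathcomp Require Import ring lra.
Import Order.TTheory GRing.Theory Num.Theory.
Import numFieldNormedType.Exports.
Local Open Scope classical_set_scope.
Local Open Scope ring_scope.
Section Helpers.
Variables (R : realType) (T : finType).

Lemma symder_ge0 (s x : seq T) a : 0 <= @symder R T s x a.
Proof. by rewrite /symder divr_ge0 // sumr_ge0. Qed.

Lemma symder_le1 (s x : seq T) a : @symder R T s x a <= 1.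
Proof.
rewrite /symder; set D := \sum_b _.
have [->|D0] := eqVneq D 0; first by rewrite invr0 mulr0 ler01.
have Dpos : 0 < D by rewrite lt_def D0 sumr_ge0.
by rewrite ler_pdivrMr // mul1r /D (bigD1 a) //= lerDl sumr_ge0.
Qed.

Lemma bmax_ge0 (r : seq T) (f : T -> R) : 0 <= \big[Num.max/0]_(a <- r) f a.
Proof. by elim: r => [|i r IH]; rewrite ?big_nil ?big_cons // le_max IH orbT. Qed.

Lemma bmax_ge (r : seq T) (f : T -> R) i : i \in r -> f i <= \big[Num.max/0]_(a <- r) f a.
Proof.
elim: r => [|j r IH] //; rewrite big_cons in_cons => /orP[/eqP->|/IH h].
  by rewrite le_max lexx.
by rewrite le_max h orbT.
Qed.

Lemma bmax_le (r : seq T) (f : T -> R) M : 0 <= M -> (forall i, f i <= M) ->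
  \big[Num.max/0]_(a <- r) f a <= M.
Proof. by move=> M0 hf; apply: (big_ind (fun v => v <= M)) => // x y; rewrite ge_max => -> ->. Qed.

Lemma supdist_ge0 (f g : T -> R) : 0 <= supdist f g.
Proof. exact: bmax_ge0. Qed.

Lemma supdist_le1 (f g : T -> R) : (forall a, 0 <= f a <= 1) -> (forall a, 0 <= g a <= 1) ->
  supdist f g <= 1.
Proof.
move=> hf hg; apply: bmax_le => // a; move: (hf a) (hg a) => /andP[h1 h2] /andP[h3 h4].
rewrite ler_norml; apply/andP; split; lra.
Qed.

Lemma supdistC (f g : T -> R) : supdist f g = supdist g f.
Proof. by apply: eq_bigr => a _; rewrite distrC. Qed.

Lemma supdist_tri0 (f g u : T -> R) : supdist f g <= supdist f u + supdist g u.
Proof.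
apply: bmax_le; first by rewrite addr_ge0 // supdist_ge0.
move=> a; apply: (@le_trans _ _ (`|f a - u a| + `|g a - u a|)).
  rewrite (_ : f a - g a = (f a - u a) - (g a - u a)); last by ring.
  exact: ler_normB.
by rewrite lerD // bmax_ge // mem_index_enum.
Qed.

Lemma supdist_tri (f g u : T -> R) : `|supdist f g - supdist f u| <= supdist g u.
Proof.
have h1 := supdist_tri0 f g u.
have h2 := supdist_tri0 f u g.
rewrite (supdistC u g) in h2.
rewrite ler_norml; apply/andP; split; lra.
Qed.

Lemma level_ge0 (F : seq T -> R) k : (forall x, 0 <= F x) -> 0 <= level_term F k.
Proof.
by move=> hF; rewrite /level_term sumr_ge0 // => x _; rewrite divr_ge0 // exprn_ge0.
Qed.

Lemma level_le (F : seq T -> R) k : (0 < #|T|)%N -> (forall x, F x <= 1) ->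
  level_term F k <= (#|T|%:R^-1) ^+ k.
Proof.
move=> T0 hF; set q : R := #|T|%:R.
have q0 : 0 < q by rewrite ltr0n.
apply: (@le_trans _ _ (\sum_(x : k.-tuple T) 1 / q ^+ (2 * k))).
  apply: ler_sum => x _; apply: ler_wpM2r => //.
rewrite sumr_const card_tuple -mulr_natr natrX -/q mul2n -addnn exprD exprVn.
have qk : q ^+ k != 0 by rewrite expf_neq0 // gt_eqF.
rewrite le_eqVlt; apply/orP; left; apply/eqP; by field.
Qed.

Lemma level_diff (F G H : seq T -> R) k : (0 < #|T|)%N ->
  (forall x, `|F x - G x| <= H x) ->
  `|level_term F k - level_term G k| <= level_term H k.
Proof.
move=> T0 hF; rewrite /level_term -sumrB.
apply: le_trans (ler_norm_sum _ _ _) _; apply: ler_sum => x _.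
rewrite -mulrBl normrM (@ger0_norm _ (_^-1)); last by rewrite invr_ge0 exprn_ge0.
by apply: ler_wpM2r => //; rewrite invr_ge0 exprn_ge0.
Qed.

Lemma cvg_bmax (r : seq T) (f : T -> nat -> R) (a : T -> R) :
  (forall i, f i n @[n --> \oo] --> a i) ->
  (\big[Num.max/0]_(i <- r) f i n) @[n --> \oo] --> \big[Num.max/0]_(i <- r) a i.
Proof.
move=> hf; elim: r => [|i r IH].
  rewrite big_nil; under eq_cvg do rewrite big_nil; exact: cvg_cst.
rewrite big_cons maxr_absE; under eq_cvg do rewrite big_cons maxr_absE.
apply: cvgMr_tmp; apply: cvgD; first exact: cvgD.
by apply: cvg_norm; apply: cvgB.
Qed.

Lemma cvg_bsum (I : Type) (r : seq I) (f : I -> nat -> R) (a : I -> R) :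
  (forall i, f i n @[n --> \oo] --> a i) ->
  (\sum_(i <- r) f i n) @[n --> \oo] --> \sum_(i <- r) a i.
Proof.
move=> hf; elim: r => [|i r IH].
  rewrite big_nil; under eq_cvg do rewrite big_nil; exact: cvg_cst.
rewrite big_cons; under eq_cvg do rewrite big_cons.
exact: cvgD.
Qed.

Lemma cvg_level k (F : nat -> seq T -> R) (G : seq T -> R) :
  (forall x, F n x @[n --> \oo] --> G x) ->
  level_term (F n) k @[n --> \oo] --> level_term G k.
Proof.
move=> hF; rewrite /level_term; apply: cvg_bsum => x.
exact: cvgMr_tmp.
Qed.

End Helpers.

Lemma tail_bound (R : realType) (t : nat -> R) (r : R) K : 0 <= r -> r < 1 ->
  (forall k, 0 <= t k <= r ^+ k) ->
  `|limn (fun n => \sum_(k < n) t k) - \sum_(k < K) t k| <= r ^+ K / (1 - r).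
Proof.
move=> r0 r1 ht.
have t0 k : 0 <= t k by case/andP: (ht k).
have tr k : t k <= r ^+ k by case/andP: (ht k).
have r1' : 0 < 1 - r by rewrite subr_gt0.
set S := fun n => \sum_(0 <= k < n) t k.
have -> : (fun n => \sum_(k < n) t k) = S by apply: funext => n; rewrite /S big_mkord.
rewrite (_ : \sum_(k < K) t k = S K); last by rewrite /S big_mkord.
have geo m : \sum_(K <= k < K + m) r ^+ k * (1 - r) = r ^+ K - r ^+ (K + m).
  elim: m => [|m IH]; first by rewrite addn0 big_geq // subrr.
  rewrite addnS big_nat_recr ?leq_addr //= IH exprS; ring.
have geo2 m : \sum_(K <= k < K + m) t k <= r ^+ K / (1 - r).
  apply: (@le_trans _ _ (\sum_(K <= k < K + m) r ^+ k)); first by apply: ler_sum => k _.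
  rewrite ler_pdivlMr // mulr_suml geo lerBlDr lerDl exprn_ge0 //.
have mono : forall n m, (n <= m)%N -> S n <= S m.
  move=> n m nm; rewrite /S [X in _ <= X](@big_cat_nat _ _ _ n) //= lerDl sumr_ge0 // => i _; exact: t0.
have ub n : S n <= S K + r ^+ K / (1 - r).
  have B0 : 0 <= r ^+ K / (1 - r) by rewrite divr_ge0 ?exprn_ge0 // ltW.
  case: (leqP n K) => nK; first by apply: (le_trans (mono _ _ nK)); rewrite lerDl.
  have -> : n = (K + (n - K))%N by rewrite subnKC // ltnW.
  by rewrite /S (@big_cat_nat _ _ _ K) ?leq_addr //= lerD2l geo2.
have cv : cvgn S.
  apply/cvg_ex; exists (sup (range S)); apply: nondecreasing_cvgn.
    by move=> n m nm; apply: mono.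
  by exists (S K + r ^+ K / (1 - r)) => _ [n _ <-]; exact: ub.
have h1 : S K <= limn S by apply: nondecreasing_cvgn_le => // n m; exact: mono.
have h2 : limn S <= S K + r ^+ K / (1 - r).
  by apply: limr_le => //; apply: nearW => n; exact: ub.
by rewrite ler_norml; apply/andP; split; lra.
Qed.

Theorem mainTheorem14 (R : realType) (T : finType) (s w : nat -> T)
  (theta eps : R) :
  (1 < #|T|)%N ->
  (forall (x : seq T) (a : T), exists L : R,
      (fun n => @symder R T (stream_prefix s n) x a) @ \oo --> L) ->
  (forall (x : seq T) (a : T),
      (fun n => @symder R T (stream_prefix w n) x a) @ \oo --> ((#|T|%:R)^-1 : R)) ->
  (forall e : R, 0 < e -> exists N : nat, forall n m : nat,
      (N <= n)%N -> (N <= m)%N ->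
      `|@Theta_sum R T (stream_prefix s n) (stream_prefix w m) - theta| < e) ->
  0 < eps ->
  let l := ln (1 / eps) / ln (#|T|%:R : R) in
  exists L : R,
    (fun n => `|theta - @zeta_hat R T (stream_prefix s n) l|) @ \oo --> L /\ L <= eps.
Proof.
move=> T1 Hs Hw Hth eps0 l.
have T0 : (0 < #|T|)%N by apply: ltn_trans T1.
set q : R := #|T|%:R.
have q1 : 1 < q by rewrite ltr1n.
have q0 : 0 < q by apply: lt_trans q1.
set rr := q^-1.
have rr0 : 0 <= rr by rewrite invr_ge0 ltW.
have rr1 : rr < 1 by rewrite invf_lt1.
set c := (q - 1) / q.
have c0 : 0 <= c by rewrite divr_ge0 // ?subr_ge0 ltW.
have cK : c / (1 - rr) = 1.
  have qn0 : q != 0 by rewrite gt_eqF.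
  have qn1 : q - 1 != 0 by rewrite subr_eq0 gt_eqF.
  have -> : 1 - rr = (q - 1) / q by rewrite /rr mulrBl divff // mul1r.
  by rewrite divff // /c mulf_neq0 // invr_eq0.
have lnq : 0 < ln q by apply: ln_gt0.
pose U (a : seq T) k := level_term (fun x => supdist (@symder R T a x) (@unif R T)) k.
have [K [HZ HK]] : exists K, (forall a, zeta_hat a l = c * \sum_(k < K) U a k) /\ rr ^+ K <= eps.
  case: (leP 0 l) => l0.
    exists (Num.truncn l).+1; split.
      move=> a; rewrite /zeta_hat; congr (_ * _); apply: eq_bigl => k.
      by rewrite -truncn_ge_nat // -ltnS ltn_ord.
    rewrite /rr exprVn -[eps]invrK ltW // ltf_pV2 ?posrE ?invr_gt0 ?exprn_gt0 //.
    rewrite -ltr_ln ?posrE ?invr_gt0 ?exprn_gt0 // lnXn // -mulr_natr.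
    have -> : ln eps^-1 = l * ln q by rewrite /l divfK ?gt_eqF // mul1r.
    by rewrite [X in _ < X]mulrC ltr_pM2r // truncnS_gt.
  exists 0%N; split.
    move=> a; rewrite /zeta_hat big_pred0 ?big_ord0 // => k.
    by apply/negbTE; rewrite -ltNge (lt_le_trans l0) // ler0n.
  rewrite expr0 leNgt; apply/negP => e1.
  have : 0 <= l.
    rewrite /l divr_ge0 ?(ltW lnq) // mul1r lnV ?posrE // oppr_ge0 ln_le0 // ltW //.
  by rewrite leNgt l0.
have [Ls HLs] : exists Ls : seq T -> T -> R, forall x a,
    @symder R T (stream_prefix s n) x a @[n --> \oo] --> Ls x a.
  have H := fun p : seq T * T => Hs p.1 p.2.
  have [f hf] := choice H.
  by exists (fun x a => f (x, a)) => x a; exact: (hf (x, a)).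
pose Uinf k := level_term (fun x => supdist (Ls x) (@unif R T)) k.
have cvZ : (c * \sum_(k < K) U (stream_prefix s n) k) @[n --> \oo] -->
    c * \sum_(k < K) Uinf k.
  apply: cvgMl_tmp; apply: cvg_bsum => k; apply: cvg_level => x.
  apply: cvg_bmax => a; apply: cvg_norm; apply: cvgB; [exact: HLs | exact: cvg_cst].
have cvW : (c * \sum_(k < K) U (stream_prefix w n) k) @[n --> \oo] --> 0.
  have E0 : c * \sum_(k < K) level_term (fun x : seq T => supdist (@unif R T) (@unif R T)) k = 0.
    rewrite big1 ?mulr0 // => k _; rewrite /level_term big1 // => x _.
    have -> : supdist (@unif R T) (@unif R T) = 0.
      apply/le_anti; rewrite supdist_ge0 andbT; apply: bmax_le => // a; by rewrite subrr normr0.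
    by rewrite mul0r.
  suff HH : (c * \sum_(k < K) U (stream_prefix w n) k) @[n --> \oo] -->
     c * \sum_(k < K) level_term (fun x : seq T => supdist (@unif R T) (@unif R T)) k.
    by rewrite E0 in HH.
  apply: cvgMl_tmp; apply: cvg_bsum => k; apply: cvg_level => x.
  apply: cvg_bmax => a; apply: cvg_norm; apply: cvgB; [exact: Hw | exact: cvg_cst].
exists `|theta - c * \sum_(k < K) Uinf k|; split.
  under eq_cvg do rewrite HZ.
  by apply: cvg_norm; apply: cvgB; [exact: cvg_cst | exact: cvZ].
apply/ler_addgt0Pr => d d0.
have d3 : 0 < d / 3 by rewrite divr_gt0.
have [N1 HN1] : exists N, forall n, (N <= n)%N ->
    `|c * \sum_(k < K) Uinf k - c * \sum_(k < K) U (stream_prefix s n) k| < d / 3.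
  by have [N _ HN] := (cvgrPdist_lt _ _).1 cvZ _ d3; exists N => n /HN.
have [N2 HN2] : exists N, forall n, (N <= n)%N ->
    `|0 - c * \sum_(k < K) U (stream_prefix w n) k| < d / 3.
  by have [N _ HN] := (cvgrPdist_lt _ _).1 cvW _ d3; exists N => n /HN.
have [N0 HN0] := Hth _ d3.
set n := maxn N0 N1; set m := maxn N0 N2.
have h1 := HN0 n m (leq_maxl _ _) (leq_maxl _ _).
have h2 := HN1 n (leq_maxr _ _).
have h3 := HN2 m (leq_maxr _ _).
pose tm k := level_term (fun x => supdist (@symder R T (stream_prefix s n) x)
                               (@symder R T (stream_prefix w m) x)) k.
have h4 : `|@Theta_sum R T (stream_prefix s n) (stream_prefix w m) - c * \sum_(k < K) tm k|
    <= rr ^+ K.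
  rewrite /Theta_sum -mulrBr normrM ger0_norm //.
  apply: le_trans (ler_wpM2l c0 (@tail_bound R _ rr K rr0 rr1 _)) _.
    move=> k; apply/andP; split; first by apply: level_ge0 => x; exact: supdist_ge0.
    by apply: level_le => // x; apply: supdist_le1 => a; rewrite symder_ge0 symder_le1.
  by rewrite mulrCA cK mulr1.
have h5 : `|c * \sum_(k < K) tm k - c * \sum_(k < K) U (stream_prefix s n) k|
    <= c * \sum_(k < K) U (stream_prefix w m) k.
  rewrite -mulrBr normrM ger0_norm //; apply: ler_wpM2l => //.
  rewrite -sumrB; apply: le_trans (ler_norm_sum _ _ _) _; apply: ler_sum => k _.
  by apply: level_diff => // x; exact: supdist_tri.
move: h1 h2 h3 h4 h5.
set A := Theta_sum _ _; set B := c * \sum_(k < K) tm k.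
set C := c * \sum_(k < K) U (stream_prefix s n) k.
set D := c * \sum_(k < K) U (stream_prefix w m) k.
set Z := c * \sum_(k < K) Uinf k.
rewrite !ltr_norml !ler_norml => /andP[a1 a2] /andP[b1 b2] /andP[c1 c2] /andP[e1 e2] /andP[f1 f2].
by apply/andP; split; lra.
Qed.
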